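(* Every element of $PSL(2,\mathbb H(\mathbb Z))$, i.e. every transformation $q\mapsto(aq+b)(cq+d)^{-1}$ induced by an invertible matrix $\begin{pmatrix}a&b\\c&d\end{pmatrix}$ with entries in the Lipschitz integers $\mathbb H(\mathbb Z)$, which satisfies the (BG) conditions belongs to the Lipschitz quaternionic modular group $PSL(2,\mathfrak L)$.
   Context: $\mathbb H(\mathbb Z)=\{a+b\mathbf i+c\mathbf j+d\mathbf k:a,b,c,d\in\mathbb Z\}$ (Lipschitz integers). A quaternionic matrix $A$ satisfies the (BG) conditions if $\bar A^tKA=K$, $K=\begin{pmatrix}0&1\\1&0\end{pmatrix}$, equivalently $\Re(a\bar c)=0$, $\Re(b\bar d)=0$, $\bar bc+\bar da=1$; these are exactly the matrices inducing orientation-preserving isometries of $\mathbf H^1_{\mathbb H}=\{q:\Re q>0\}$. $PSL(2,\mathfrak L)$ is the group generated by $T(q)=q^{-1}$ and the translations $q\mapsto q+\omega$, $\omega\in\{b\mathbf i+c\mathbf j+d\mathbf k:b,c,d\in\mathbb Z\}$. *)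

(* Defs.v *)
From HB Require Import structures.
From mathcomp Require Import all_boot all_order all_algebra.
Set Implicit Arguments. Unset Strict Implicit. Unset Printing Implicit Defensive.
Import Order.TTheory GRing.Theory Num.Theory.
Local Open Scope ring_scope.

(* q = q0 + q1 i + q2 j + q3 k *)
Record quat (R : Type) := Quat { q0 : R; q1 : R; q2 : R; q3 : R }.

Section QuatOps.
Variable R : ringType.
Definition qadd (x y : quat R) : quat R :=
  Quat (q0 x + q0 y) (q1 x + q1 y) (q2 x + q2 y) (q3 x + q3 y).
(* Hamilton product, i^2 = j^2 = k^2 = ijk = -1 *)
Definition qmul (x y : quat R) : quat R :=
  Quat (q0 x * q0 y - q1 x * q1 y - q2 x * q2 y - q3 x * q3 y)
       (q0 x * q1 y + q1 x * q0 y + q2 x * q3 y - q3 x * q2 y)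
       (q0 x * q2 y - q1 x * q3 y + q2 x * q0 y + q3 x * q1 y)
       (q0 x * q3 y + q1 x * q2 y - q2 x * q1 y + q3 x * q0 y).
Definition qconj (x : quat R) : quat R := Quat (q0 x) (- q1 x) (- q2 x) (- q3 x).
Definition qone : quat R := Quat 1 0 0 0.
Definition qnorm2 (x : quat R) : R := q0 x ^+ 2 + q1 x ^+ 2 + q2 x ^+ 2 + q3 x ^+ 2.
Definition qre (x : quat R) : R := q0 x.
End QuatOps.

Definition qinv (F : fieldType) (x : quat F) : quat F :=
  let n := (qnorm2 x)^-1 in
  Quat (q0 x * n) (- q1 x * n) (- q2 x * n) (- q3 x * n).

(* embedding of Lipschitz integers H(Z) = quat int into quaternions over R *)
Definition qofint (R : ringType) (x : quat int) : quat R :=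
  Quat (q0 x)%:~R (q1 x)%:~R (q2 x)%:~R (q3 x)%:~R.

Definition BG (a b c d : quat int) : Prop :=
  [/\ qre (qmul a (qconj c)) = 0,
      qre (qmul b (qconj d)) = 0 &
      qadd (qmul (qconj b) c) (qmul (qconj d) a) = qone int].

Definition mobius (R : fieldType) (a b c d : quat int) (q : quat R) : quat R :=
  qmul (qadd (qmul (qofint R a) q) (qofint R b))
       (qinv (qadd (qmul (qofint R c) q) (qofint R d))).

(* generators of PSL(2, L): T(q) = q^{-1} and translations q |-> q + (b i + c j + d k) *)
Inductive gen := GenT | GenTr (b c d : int).

Definition gen_act (R : fieldType) (g : gen) (q : quat R) : quat R :=
  match g with
  | GenT => qinv q
  | GenTr b c d => qadd q (Quat 0 b%:~R c%:~R d%:~R)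
  end.

(* composition of a word of generators (the generating set is closed under
   inverses: T^{-1} = T and the inverse of a translation is a translation) *)
Definition word_act (R : fieldType) (w : seq gen) (q : quat R) : quat R :=
  foldr (@gen_act R) q w.

Definition in_PSL2L (R : realFieldType) (f : quat R -> quat R) : Prop :=
  exists w : seq gen, forall q : quat R, 0 < qre q -> f q = word_act w q.

(* Main.v *)
Require Import Defs.
From HB Require Import structures.
From mathcomp Require Import all_boot all_order all_algebra.
From mathcomp Require Import ring lra zify.
Import Order.TTheory GRing.Theory Num.Theory.
Set Implicit Arguments. Unset Strict Implicit. Unset Printing Implicit Defensive.
Local Open Scope ring_scope.



Lemma quat_eq (R : Type) (x y : quat R) :
  q0 x = q0 y -> q1 x = q1 y -> q2 x = q2 y -> q3 x = q3 y -> x = y.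
Proof. by case: x => ????; case: y => ???? /= -> -> -> ->. Qed.

Ltac qunf := rewrite /qre /qnorm2 /qmul /qconj /qadd /qone /=.
Ltac qring := apply: quat_eq; qunf; ring.

Section Alg.
Variable R : comNzRingType.
Implicit Types x y z : quat R.
Lemma qmulA x y z : qmul x (qmul y z) = qmul (qmul x y) z.
Proof. case: x y z => ???? [????] [????]; qring. Qed.
Lemma qmul1q x : qmul (qone R) x = x.
Proof. case: x => ????; qring. Qed.
Lemma qmulq1 x : qmul x (qone R) = x.
Proof. case: x => ????; qring. Qed.
Lemma qnorm2M x y : qnorm2 (qmul x y) = qnorm2 x * qnorm2 y.
Proof. case: x y => ???? [????]; qunf; ring. Qed.
Lemma qnorm2_one : qnorm2 (qone R) = 1.
Proof. qunf; ring. Qed.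
End Alg.

Definition BGR (R : ringType) (a b c d : quat R) : Prop :=
  [/\ qre (qmul a (qconj c)) = 0, qre (qmul b (qconj d)) = 0 &
      qadd (qmul (qconj b) c) (qmul (qconj d) a) = qone R].

Lemma qofint_add (R : comNzRingType) x y : qofint R (qadd x y) = qadd (qofint R x) (qofint R y).
Proof. by case: x y => ???? [????]; apply: quat_eq; rewrite /qofint /qadd /= intrD. Qed.
Lemma qofint_mul (R : comNzRingType) x y : qofint R (qmul x y) = qmul (qofint R x) (qofint R y).
Proof. case: x y => ???? [????]; apply: quat_eq; rewrite /qofint /qmul /= ?(rmorphB, rmorphD, rmorphM). all: reflexivity. Qed.
Lemma qofint_conj (R : comNzRingType) x : qofint R (qconj x) = qconj (qofint R x).
Proof. by case: x => ????; apply: quat_eq; rewrite /qofint /qconj /= ?intrN. Qed.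

Lemma BG_cast (R : comNzRingType) a b c d : BG a b c d ->
  BGR (qofint R a) (qofint R b) (qofint R c) (qofint R d).
Proof.
case=> h1 h2 h3; split.
- by rewrite -qofint_conj -qofint_mul; move: h1; rewrite /qre /= => ->; rewrite rmorph0.
- by rewrite -qofint_conj -qofint_mul; move: h2; rewrite /qre /= => ->; rewrite rmorph0.
- by rewrite -!qofint_conj -!qofint_mul -qofint_add h3; apply: quat_eq; rewrite /= ?rmorph0 ?rmorph1.
Qed.

Lemma herm (R : comNzRingType) (A B C D q : quat R) : BGR A B C D ->
  qre (qmul (qconj (qadd (qmul C q) D)) (qadd (qmul A q) B)) = q0 q.
Proof.
case=> h1 h2 h3.
have e : forall A B C D q : quat R,
  qre (qmul (qconj (qadd (qmul C q) D)) (qadd (qmul A q) B)) =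
  qnorm2 q * qre (qmul A (qconj C)) + qre (qmul B (qconj D)) +
   qre (qmul (qadd (qmul (qconj B) C) (qmul (qconj D) A)) q).
  by move=> [????] [????] [????] [????] [????]; qunf; ring.
by rewrite e h1 h2 h3; qunf; ring.
Qed.

Lemma nz_of_re (R : realFieldType) (X Y : quat R) :
  0 < qre (qmul (qconj Y) X) -> qnorm2 Y != 0.
Proof.
case: X Y => [x0 x1 x2 x3] [y0 y1 y2 y3]; qunf => h.
apply/eqP => hn.
have s0 := sqr_ge0 y0; have s1 := sqr_ge0 y1; have s2 := sqr_ge0 y2; have s3 := sqr_ge0 y3.
have z : forall y : R, y ^+ 2 = 0 -> y = 0 by move=> y /eqP; rewrite sqrf_eq0 => /eqP.
have e0 : y0 = 0 by apply: z; lra.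
have e1 : y1 = 0 by apply: z; lra.
have e2 : y2 = 0 by apply: z; lra.
have e3 : y3 = 0 by apply: z; lra.
move: h; rewrite e0 e1 e2 e3; rewrite !(mul0r, oppr0, subr0, addr0) ltxx.
done.
Qed.

Section Inv.
Variable R : fieldType.
Implicit Types x y z : quat R.
Lemma qmulV x : qnorm2 x != 0 -> qmul x (qinv x) = qone R.
Proof.
case: x => x0 x1 x2 x3 h; rewrite /qinv.
move: h; set N := qnorm2 _ => h.
have hn : N * N^-1 = 1 by rewrite mulfV.
apply: quat_eq; qunf; [rewrite -hn /N /qnorm2 /=; ring | ring..].
Qed.
Lemma qVmul x : qnorm2 x != 0 -> qmul (qinv x) x = qone R.
Proof.
case: x => x0 x1 x2 x3 h; rewrite /qinv.
move: h; set N := qnorm2 _ => h.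
have hn : N * N^-1 = 1 by rewrite mulfV.
apply: quat_eq; qunf; [rewrite -hn /N /qnorm2 /=; ring | ring..].
Qed.
Lemma qinv_uniq x y : qmul x y = qone R -> qinv x = y.
Proof.
move=> h.
have hx : qnorm2 x != 0.
  apply/eqP => e; have := qnorm2M x y; rewrite h e qnorm2_one mul0r.
  by move/eqP; rewrite oner_eq0.
by rewrite -[qinv x]qmulq1 -h qmulA qVmul // qmul1q.
Qed.
Lemma qinv_mulV y z : qnorm2 y != 0 -> qnorm2 z != 0 ->
  qinv (qmul y (qinv z)) = qmul z (qinv y).
Proof.
move=> hy hz; apply: qinv_uniq.
by rewrite -qmulA (qmulA (qinv z)) qVmul // qmul1q qmulV.
Qed.
End Inv.



Definition wq (R : nzRingType) (w1 w2 w3 : R) : quat R := Quat 0 w1 w2 w3.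

Section Step.
Variable R : comNzRingType.
Implicit Types a b c d x y q A B C D W X Y V : quat R.
Lemma stepE1 a c w1 w2 w3 :
  qre (qmul c (qconj (qadd a (qmul (wq w1 w2 w3) c)))) = qre (qmul a (qconj c)).
Proof. case: a c => ???? [????]; qunf; rewrite /wq /=; ring. Qed.
Lemma stepE3 a b c d w1 w2 w3 :
  qadd (qmul (qconj d) (qadd a (qmul (wq w1 w2 w3) c))) (qmul (qconj (qadd b (qmul (wq w1 w2 w3) d))) c)
  = qadd (qmul (qconj b) c) (qmul (qconj d) a).
Proof. case: a b c d => ???? [????] [????] [????]; apply: quat_eq; qunf; rewrite /wq /=; ring. Qed.
Lemma rowZ A B C D W q : qadd (qmul (qadd A (qmul W C)) q) (qadd B (qmul W D)) =
  qadd (qadd (qmul A q) B) (qmul W (qadd (qmul C q) D)).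
Proof. case: A B C D W q => ???? [????] [????] [????] [????] [????]; qring. Qed.
Lemma distr X W Y V : qmul (qadd X (qmul W Y)) V = qadd (qmul X V) (qmul W (qmul Y V)).
Proof. case: X W Y V => ???? [????] [????] [????]; qring. Qed.
Lemma qnorm2_conj x : qnorm2 (qconj x) = qnorm2 x.
Proof. case: x => ????; qunf; ring. Qed.
Lemma qadd0l_mul0 x y : qadd (qmul y (Quat 0 0 0 0)) x = x.
Proof. case: x y => ???? [????]; qring. Qed.
Lemma normkey a c w1 w2 w3 :
  qnorm2 (qadd a (qmul (wq w1 w2 w3) c)) * qnorm2 c =
  (q0 (qmul a (qconj c)))^+2 + (q1 (qmul a (qconj c)) + qnorm2 c * w1)^+2 +
  (q2 (qmul a (qconj c)) + qnorm2 c * w2)^+2 + (q3 (qmul a (qconj c)) + qnorm2 c * w3)^+2.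
Proof. case: a c => ???? [????]; qunf; rewrite /wq /=; ring. Qed.
End Step.

Lemma BG_step a b c d w1 w2 w3 : BG a b c d ->
  BG c d (qadd a (qmul (wq w1 w2 w3) c)) (qadd b (qmul (wq w1 w2 w3) d)).
Proof. by case=> h1 h2 h3; split; rewrite ?stepE1 ?stepE3. Qed.

Lemma step_eq (R : realFieldType) a b c d (w1 w2 w3 : int) (q : quat R) :
  BG a b c d -> 0 < q0 q ->
  mobius a b c d q = gen_act (GenTr (-w1) (-w2) (-w3)) (gen_act GenT
    (mobius c d (qadd a (qmul (wq w1 w2 w3) c)) (qadd b (qmul (wq w1 w2 w3) d)) q)).
Proof.
move=> hBG hq.
have hR := BG_cast R hBG.
have hNR := BG_cast R (BG_step w1 w2 w3 hBG).
rewrite !qofint_add !qofint_mul in hNR.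
rewrite /mobius /= !qofint_add !qofint_mul rowZ.
set X := qadd (qmul (qofint R a) q) (qofint R b).
set Y := qadd (qmul (qofint R c) q) (qofint R d).
set W := qofint R (wq w1 w2 w3).
have hY : qnorm2 Y != 0 by apply: (@nz_of_re _ X); rewrite /X /Y herm.
have hZ : qnorm2 (qadd X (qmul W Y)) != 0.
  apply: (@nz_of_re _ Y); have := herm q hNR; rewrite rowZ -/X -/Y -/W => ->; done.
rewrite qinv_mulV // distr qmulV // qmulq1.
set P := qmul X (qinv Y).
apply: quat_eq; rewrite /W /qadd /= ?rmorphN ?rmorph0; ring.
Qed.



Lemma stepP (R : realFieldType) a b c d (w1 w2 w3 : int) : BG a b c d ->
  in_PSL2L (mobius (R:=R) c d (qadd a (qmul (wq w1 w2 w3) c)) (qadd b (qmul (wq w1 w2 w3) d))) ->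
  in_PSL2L (mobius (R:=R) a b c d).
Proof.
move=> hBG [w hw]; exists [:: GenTr (-w1) (-w2) (-w3), GenT & w] => q hq.
by rewrite /= -hw // (step_eq w1 w2 w3 hBG hq).
Qed.

Lemma qinv_sign (R : realFieldType) (s : int) : s = 1 \/ s = -1 ->
  qinv (Quat (s%:~R : R) 0 0 0) = Quat s%:~R 0 0 0.
Proof.
move=> hs; apply: qinv_uniq; apply: quat_eq; qunf; last 3 first.
- ring. - ring. - ring.
by case: hs => ->; rewrite ?rmorph1 ?rmorphN1; ring.
Qed.

Lemma direct (R : realFieldType) a b c d (s : int) : BG a b c d -> c = Quat 0 0 0 0 ->
  a = Quat s 0 0 0 -> (s = 1 \/ s = -1) -> in_PSL2L (mobius (R:=R) a b c d).
Proof.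
case=> h1 h2 h3 ec ea hs; subst c a.
case: b d h2 h3 => b0 b1 b2 b3 [d0 d1 d2 d3] h2 h3.
have f0 := congr1 (@q0 _) h3; have f1 := congr1 (@q1 _) h3.
have f2 := congr1 (@q2 _) h3; have f3 := congr1 (@q3 _) h3.
move: h2 f0 f1 f2 f3; qunf.
exists [:: GenTr (s * b1) (s * b2) (s * b3)] => q hq.
case: hs h2 f0 f1 f2 f3 => -> h2 f0 f1 f2 f3.
- have e0 : d0 = 1 by lia.
  have e1 : d1 = 0 by lia. have e2 : d2 = 0 by lia. have e3 : d3 = 0 by lia.
  subst d0 d1 d2 d3. have eb : b0 = 0 by lia. subst b0.
  rewrite /mobius /word_act /=.
  have -> : qadd (qmul (qofint R (Quat 0 0 0 0)) q) (qofint R (Quat 1 0 0 0)) = Quat (1%:~R) 0 0 0.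
    apply: quat_eq; rewrite /qofint /qadd /qmul /= ?rmorph0; ring.
  rewrite qinv_sign; last by left.
  case: q hq => x0 x1 x2 x3 _; apply: quat_eq; rewrite /qofint /qadd /qmul /= ?rmorph0 ?rmorph1 ?intrM ?rmorph1; ring.
- have e0 : d0 = -1 by lia.
  have e1 : d1 = 0 by lia. have e2 : d2 = 0 by lia. have e3 : d3 = 0 by lia.
  subst d0 d1 d2 d3. have eb : b0 = 0 by lia. subst b0.
  rewrite /mobius /word_act /=.
  have -> : qadd (qmul (qofint R (Quat 0 0 0 0)) q) (qofint R (Quat (-1) 0 0 0)) = Quat ((-1)%:~R) 0 0 0.
    apply: quat_eq; rewrite /qofint /qadd /qmul /= ?rmorph0; ring.
  rewrite qinv_sign; last by right.
  case: q hq => x0 x1 x2 x3 _; apply: quat_eq; rewrite /qofint /qadd /qmul /= ?rmorph0 ?rmorphN1 ?intrM ?rmorphN1; ring.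
Qed.

Lemma round (u N : int) : 0 < N -> exists w : int, - N <= 2 * (u + N * w) <= N.
Proof.
move=> hN.
have hN0 : N != 0 by apply/negP => /eqP; lia.
have e := divz_eq u N; have r0 := modz_ge0 u hN0; have r1 := ltz_pmod u hN.
move: e r0 r1; set k := (u %/ N)%Z; set r := (u %% N)%Z => e r0 r1.
case: (boolP (2 * r <= N)) => h.
- by exists (-k); nia.
- by exists (-k - 1); nia.
Qed.



Lemma qnorm2_ge0 (x : quat int) : 0 <= qnorm2 x.
Proof. case: x => ????; rewrite /qnorm2 /=; nia. Qed.

Lemma sq_pos (x : int) : x != 0 -> 1 <= x ^+ 2.
Proof. move=> /eqP h; rewrite expr2; nia. Qed.

Lemma base_c0 (R : realFieldType) a b d : BG a b (Quat 0 0 0 0) d ->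
  in_PSL2L (mobius (R:=R) a b (Quat 0 0 0 0) d).
Proof.
move=> hBG.
have hn : qnorm2 a = 1.
  case: (hBG) => _ _ h3.
  have hda : qmul (qconj d) a = qone int by rewrite -h3 qadd0l_mul0.
  have := qnorm2M (qconj d) a; rewrite hda qnorm2_one qnorm2_conj.
  have := qnorm2_ge0 d; have := qnorm2_ge0 a.
  move: (qnorm2 d) (qnorm2 a) => x y hy hx e.
  have y1 : 1 <= y.
    case: (boolP (y == 0)) => [/eqP ey|ny]; first by rewrite ey mulr0 in e; lia.
    lia.
  have x1 : 1 <= x.
    case: (boolP (x == 0)) => [/eqP ex|nx]; first by rewrite ex mul0r in e; lia.
    lia.
  nia.
case: a hBG hn => a0 a1 a2 a3 hBG hn.
have [ea0|a0n] := eqVneq a0 0.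
- subst a0.
  have h1 := BG_step 0 0 0 hBG.
  have h2 := BG_step a1 a2 a3 h1.
  have h3 := BG_step a1 a2 a3 h2.
  apply: (stepP hBG (w1:=0) (w2:=0) (w3:=0)).
  apply: (stepP h1 (w1:=a1) (w2:=a2) (w3:=a3)).
  apply: (stepP h2 (w1:=a1) (w2:=a2) (w3:=a3)).
  move: hn; rewrite /qnorm2 /= !expr2 mul0r add0r => hn.
  have sq : qmul (wq a1 a2 a3) (Quat 0 a1 a2 a3) = Quat (-1) 0 0 0.
    move: hn; rewrite /qnorm2 /= => hn.
    apply: quat_eq; rewrite /qmul /wq /=; [lia | ring..].
  have z1 : forall x : quat int, qadd x (qmul (wq 0 0 0) (Quat 0 0 0 0)) = x.
    by move=> [????]; qring.
  have z2 : forall x : quat int, qadd (Quat 0 0 0 0) x = x.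
    by move=> [????]; qring.
  refine (@direct R _ _ _ _ (-1) h3 _ _ _); last by right.
  + rewrite (z1 (Quat 0 a1 a2 a3)) (z2 (qmul (wq a1 a2 a3) (Quat 0 a1 a2 a3))) sq.
    apply: quat_eq; rewrite /qadd /qmul /wq /=; ring.
  + by rewrite (z1 (Quat 0 a1 a2 a3)) (z2 (qmul (wq a1 a2 a3) (Quat 0 a1 a2 a3))) sq.
- move: hn; rewrite /qnorm2 /= => hn.
  have t0 := sq_pos a0n.
  have s1 := sqr_ge0 a1; have s2 := sqr_ge0 a2; have s3 := sqr_ge0 a3.
  have z : forall y : int, y ^+ 2 = 0 -> y = 0 by move=> y /eqP; rewrite sqrf_eq0 => /eqP.
  have ha1 : a1 = 0 by apply: z; lia.
  have ha2 : a2 = 0 by apply: z; lia.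
  have ha3 : a3 = 0 by apply: z; lia.
  have e0 : (a0 - 1) * (a0 + 1) = 0.
    have -> : (a0 - 1) * (a0 + 1) = a0 ^+ 2 - 1 by ring.
    lia.
  have hs : a0 = 1 \/ a0 = -1.
    move: e0 => /eqP; rewrite mulf_eq0 => /orP [] /eqP; lia.
  subst a1 a2 a3.
  exact: (@direct R _ _ _ _ a0 hBG erefl erefl hs).
Qed.

Lemma norm0 (c : quat int) : qnorm2 c = 0 -> c = Quat 0 0 0 0.
Proof.
case: c => c0 c1 c2 c3; rewrite /qnorm2 /= => e0.
have z : forall y : int, y ^+ 2 = 0 -> y = 0 by move=> y /eqP; rewrite sqrf_eq0 => /eqP.
have s0 := sqr_ge0 c0; have s1 := sqr_ge0 c1; have s2 := sqr_ge0 c2; have s3 := sqr_ge0 c3.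
have -> : c0 = 0 by apply: z; lia.
have -> : c1 = 0 by apply: z; lia.
have -> : c2 = 0 by apply: z; lia.
have -> : c3 = 0 by apply: z; lia.
done.
Qed.

Lemma bound (s N x1 x2 x3 : int) : 0 < N -> s * N = 0 ^+ 2 + x1 ^+ 2 + x2 ^+ 2 + x3 ^+ 2 ->
  - N <= 2 * x1 <= N -> - N <= 2 * x2 <= N -> - N <= 2 * x3 <= N -> s < N.
Proof.
move=> hN e b1 b2 b3.
have f : forall x : int, - N <= 2 * x <= N -> 4 * x ^+ 2 <= N ^+ 2.
  move=> x hx; have h1 : 0 <= N - 2 * x by lia.
  have h2 : 0 <= N + 2 * x by lia.
  have := mulr_ge0 h1 h2; rewrite !expr2; nia.
have g1 := f _ b1; have g2 := f _ b2; have g3 := f _ b3.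
move: e g1 g2 g3; rewrite !expr2 => e g1 g2 g3.
nia.
Qed.

Lemma desc (R : realFieldType) (n : nat) : forall a b c d, BG a b c d ->
  qnorm2 c < n%:Z -> in_PSL2L (mobius (R:=R) a b c d).
Proof.
elim: n => [|n IH] a b c d hBG hc.
  by have := qnorm2_ge0 c; lia.
have [e0|nz] := eqVneq (qnorm2 c) 0.
  by move: hBG; rewrite (norm0 e0) => hBG; apply: base_c0.
have hN : 0 < qnorm2 c by have := qnorm2_ge0 c; move: nz => /eqP; lia.
have h0 : q0 (qmul a (qconj c)) = 0 by case: hBG.
have [w1 hw1] := round (q1 (qmul a (qconj c))) hN.
have [w2 hw2] := round (q2 (qmul a (qconj c))) hN.
have [w3 hw3] := round (q3 (qmul a (qconj c))) hN.
apply: (stepP hBG (w1:=w1) (w2:=w2) (w3:=w3)).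
apply: IH; first exact: BG_step.
have key := normkey a c w1 w2 w3.
rewrite h0 in key.
have := bound hN key hw1 hw2 hw3.
move=> hs; move: hc; rewrite -addn1 PoszD => hc. by apply: (lt_le_trans hs); rewrite -ltzD1.
Qed.

Unset Implicit Arguments.
Theorem mainTheorem10 (R : realFieldType) (a b c d : quat int) :
  BG a b c d -> @in_PSL2L R (@mobius R a b c d).
Proof.
move=> hBG; apply: (@desc R (`|qnorm2 c|%N.+1) a b c d hBG).
have hx := qnorm2_ge0 c; have e := gez0_abs hx.
by rewrite -[X in X < _]e ltz_nat ltnSn.
Qed.
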